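(* Let $\mathcal{Y}=\{1,\dots,m\}$ be a finite set of classes and $\Delta(\mathcal{Y})$ the set of probability vectors on $\mathcal{Y}$. Let $u:\mathcal{Y}\times\mathcal{Y}\to\mathbb{R}_+$ be nonnegative and nondegenerate (for every $y$ there is $a$ with $u(a,y)>0$), and define $p^u:\Delta(\mathcal{Y})\to\Delta(\mathcal{Y})$ by $p^u_y(q)=\bar u(y,q)/\sum_{y'\in\mathcal{Y}}\bar u(y',q)$, where $\bar u(y,q)=\sum_{y'}u(y,y')q_{y'}$. Then the level sets of $p^u$ are convex: for any $q,q'\in\Delta(\mathcal{Y})$ and $\alpha\in[0,1]$, if $p^u(q)=p^u(q')=p$ then $p^u(\alpha q+(1-\alpha)q')=p$. *)

(* Defs.v *)
From mathcomp Require Import all_boot all_order all_algebra.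
Set Implicit Arguments. Unset Strict Implicit. Unset Printing Implicit Defensive.
Import Order.TTheory GRing.Theory Num.Theory.
Local Open Scope ring_scope.

Definition prob_vec (R : realFieldType) (m : nat) (q : 'I_m -> R) : Prop :=
  (forall y, 0 <= q y) /\ \sum_(y < m) q y = 1.

Definition ubar (R : realFieldType) (m : nat) (u : 'I_m -> 'I_m -> R)
  (y : 'I_m) (q : 'I_m -> R) : R := \sum_(y' < m) u y y' * q y'.

Definition pu (R : realFieldType) (m : nat) (u : 'I_m -> 'I_m -> R)
  (q : 'I_m -> R) : 'I_m -> R :=
  fun y => ubar u y q / \sum_(y' < m) ubar u y' q.

(* Main.v *)
Require Import Defs.
From mathcomp Require Import all_boot all_order all_algebra.
From mathcomp Require Import ring.
Import Order.TTheory GRing.Theory Num.Theory.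
Local Open Scope ring_scope.

Lemma S_pos (R : realFieldType) (m : nat) (u : 'I_m -> 'I_m -> R)
  (u_ge0 : forall a y, 0 <= u a y)
  (u_nondeg : forall y, exists a, 0 < u a y) (q : 'I_m -> R) :
  prob_vec q -> 0 < \sum_(y' < m) ubar u y' q.
Proof.
move=> [q0 q1].
have [y0 hy0] : exists y0, 0 < q y0.
  case: (pickP (fun y => 0 < q y)) => [y0 hy0|H]; first by exists y0.
  have : \sum_(y < m) q y = 0.
    by apply: big1 => y _; apply/eqP; rewrite eq_le q0 andbT leNgt H.
  by rewrite q1 => /eqP; rewrite oner_eq0.
have [a ha] := u_nondeg y0.
have ub_ge0 : forall y, 0 <= ubar u y q.
  by move=> y; apply: sumr_ge0 => i _; apply: mulr_ge0.
rewrite (bigD1 a) //=; apply: ltr_wpDr; first by apply: sumr_ge0.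
rewrite /ubar (bigD1 y0) //=; apply: ltr_wpDr.
  by apply: sumr_ge0 => i _; apply: mulr_ge0.
exact: mulr_gt0.
Qed.

Theorem lemma1 (R : realFieldType) (m : nat) (u : 'I_m -> 'I_m -> R)
  (u_ge0 : forall a y, 0 <= u a y)
  (u_nondeg : forall y, exists a, 0 < u a y)
  (q q' p : 'I_m -> R) (alpha : R)
  (hq : prob_vec q) (hq' : prob_vec q')
  (halpha0 : 0 <= alpha) (halpha1 : alpha <= 1)
  (hpq : forall y, pu u q y = p y) (hpq' : forall y, pu u q' y = p y) :
  forall y, pu u (fun z => alpha * q z + (1 - alpha) * q' z) y = p y.
Proof.
move=> y.
set S := \sum_(y' < m) ubar u y' q.
set S' := \sum_(y' < m) ubar u y' q'.
have SP : 0 < S by apply: S_pos.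
have SP' : 0 < S' by apply: S_pos.
have lin : forall z, ubar u z (fun z => alpha * q z + (1 - alpha) * q' z)
    = alpha * ubar u z q + (1 - alpha) * ubar u z q'.
  move=> z; rewrite /ubar !mulr_sumr -big_split /=; apply: eq_bigr => i _.
  by rewrite mulrDr !mulrA [alpha * _]mulrC [(1 - alpha) * _]mulrC.
have e1 : ubar u y q = p y * S.
  by rewrite -(hpq y) /pu -/S mulfVK // gt_eqF.
have e2 : ubar u y q' = p y * S'.
  by rewrite -(hpq' y) /pu -/S' mulfVK // gt_eqF.
have Sm : \sum_(y' < m) ubar u y' (fun z => alpha * q z + (1 - alpha) * q' z)
   = alpha * S + (1 - alpha) * S'.
  by rewrite (eq_bigr _ (fun z _ => lin z)) big_split /= -!mulr_sumr.
have Smp : 0 < alpha * S + (1 - alpha) * S'.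
  have [->|a0] := eqVneq alpha 0; first by rewrite mul0r add0r subr0 mul1r.
  have h1 : 0 < alpha * S by apply: mulr_gt0 => //; rewrite lt_def a0.
  have h2 : 0 <= (1 - alpha) * S' by apply: mulr_ge0; rewrite ?subr_ge0 // ltW.
  by apply: lt_le_trans (lerD (lexx _) h2); rewrite addr0.
rewrite /pu Sm lin e1 e2.
have -> : alpha * (p y * S) + (1 - alpha) * (p y * S')
   = p y * (alpha * S + (1 - alpha) * S') by ring.
by rewrite mulfK // gt_eqF.
Qed.
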